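(* Let $\mathcal B$ be a BMC with $\mathbf c^*_q<\infty$ for all $q\in\mathcal T$, and consider the Q-learning process with learning rates $\lambda_i\in[0,1]$, a fixed selection distribution $(p_q)_{q\in\mathcal T}$, and initial value $Q_0=\kappa\mathbf c^*$ for a scalar $\kappa\ge 1$. Then for all $i\in\mathbb N$, $\mathbf c^*\le T(\mathbb E Q_i)\le \mathbb E Q_{i+1}\le\mathbb E Q_i$.
   Context: A branching Markov chain (BMC) is $\mathcal B=(\mathcal T,p,c)$ with $\mathcal T$ a finite set of types, $p(q)$ for each $q\in\mathcal T$ a probability distribution with finite support over finite lists $\mathcal T^*$ of types (the offspring distribution), and $c:\mathcal T\to\mathbb R_{>0}$ a strictly positive cost. (It is a BMDP with one action per type.) For a list $\alpha$, $|\alpha|$ is its length and $\alpha_i$ its $i$-th element. Its process: a list of entities; repeatedly some entity of type $q$ is replaced by a list $\beta$ drawn from $p(q)$, incurring cost $c(q)$, until the list is empty. $\mathbf c^*_q\in[0,\infty]$ denotes the expected total cost until extinction starting from the single entity $q$; equivalently $\mathbf c^*$ is the least fixed point in $[0,\infty]^{\mathcal T}$ of $F(\mathbf x)_q=c(q)+\sum_\alpha p(q)(\alpha)\sum_{i=1}^{|\alpha|}\mathbf x_{\alpha_i}$. Q-values for a BMC are vectors $Q\in\mathbb R_{\ge0}^{\mathcal T}$. The target operator is $T(Q)(q)=c(q)+\sum_{\alpha\in\mathcal T^*}p(q)(\alpha)\sum_{j=1}^{|\alpha|}Q(\alpha_j)$ (an affine map $T(Q)=BQ+\mathbf c$ with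 $B$ a nonnegative matrix). Q-learning process: given deterministic learning rates $\lambda_i\in[0,1]$, a probability distribution $(p_q)_{q\in\mathcal T}$ and an initial vector $Q_0\ge\mathbf 0$, at each step $i=0,1,2,\dots$ a type $q_i$ is selected with probability $p_{q_i}$ independently of all previous randomness, then a list $\beta^i$ is drawn from $p(q_i)$ independently, and $Q_{i+1}(q_i)=(1-\lambda_i)Q_i(q_i)+\lambda_i\big(c(q_i)+\sum_{j=1}^{|\beta^i|}Q_i(\beta^i_j)\big)$, while $Q_{i+1}(q)=Q_i(q)$ for $q\ne q_i$. $\mathbb E Q_i$ is the componentwise expectation; inequalities between vectors are componentwise. *)

(* Defs.v *)
From HB Require Import structures.
From mathcomp Require Import all_boot all_order all_algebra.
From mathcomp Require Import reals constructive_ereal.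
Set Implicit Arguments. Unset Strict Implicit. Unset Printing Implicit Defensive.
Import Order.TTheory GRing.Theory Num.Theory.
Local Open Scope ring_scope.

(* A BMC over a finite type of types [T]:
   - [off q] : the offspring distribution p(q), given as a finite list of
     (probability, offspring list) pairs (finite support);
   - [c q]   : the cost. *)
Section BMC.
Variables (R : realType) (T : finType).
Variables (off : T -> seq (R * seq T)) (c : T -> R).

Definition is_distr_list (d : seq (R * seq T)) : Prop :=
  (forall pr, pr \in d -> 0 <= pr.1) /\ \sum_(pr <- d) pr.1 = 1.

Definition is_BMC : Prop :=
  (forall q, is_distr_list (off q)) /\ (forall q, 0 < c q).

Definition Fop (x : T -> \bar R) (q : T) : \bar R :=
  ((c q)%:E + \sum_(pr <- off q) (pr.1)%:E * \sum_(t <- pr.2) x t)%E.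

(* cs (a real vector, hence finite) is the least fixed point of F in [0,oo]^T *)
Definition is_lfp_F (cs : T -> R) : Prop :=
  (forall q, 0 <= cs q) /\
  (forall q, Fop (fun t => (cs t)%:E) q = (cs q)%:E) /\
  (forall x : T -> \bar R, (forall q, (0 <= x q)%E) -> (forall q, Fop x q = x q) ->
     forall q, ((cs q)%:E <= x q)%E).

Definition Top (Q : T -> R) (q : T) : R :=
  c q + \sum_(pr <- off q) pr.1 * \sum_(t <- pr.2) Q t.

Variables (lam : nat -> R) (ps : T -> R).

Definition Qupd (i : nat) (Q : T -> R) (q : T) (beta : seq T) : T -> R :=
  fun t => if t == q then (1 - lam i) * Q q + lam i * (c q + \sum_(u <- beta) Q u)
           else Q t.

(* A history is a list of steps (q_j, k_j) where k_j indexes the drawn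
   entry of the list [off q_j]. [Qrun i Q h] runs the updates from step i. *)
Fixpoint Qrun (i : nat) (Q : T -> R) (h : seq (T * nat)) : T -> R :=
  match h with
  | [::] => Q
  | (q, k) :: h' => Qrun i.+1 (Qupd i Q q (nth (0, [::]) (off q) k).2) h'
  end.

(* expectation of f over the first n steps: each step independently selects
   q with probability ps q, then independently draws entry k of off q with
   probability (nth _ (off q) k).1 *)
Fixpoint hexp (n : nat) (f : seq (T * nat) -> R) : R :=
  match n with
  | 0 => f [::]
  | n'.+1 => \sum_(q : T) ps q *
      \sum_(k < size (off q)) (nth (0, [::]) (off q) k).1 *
         hexp n' (fun h => f ((q, nat_of_ord k) :: h))
  end.

Definition EQ (Q0 : T -> R) (i : nat) : T -> R :=
  fun t => hexp i (fun h => Qrun 0 Q0 h t).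

End BMC.

(* Main.v *)
Require Import Defs.
From HB Require Import structures.
From mathcomp Require Import all_boot all_order all_algebra.
From mathcomp Require Import reals constructive_ereal.
From mathcomp Require Import ring lra.
Import Order.TTheory GRing.Theory Num.Theory.
Local Open Scope ring_scope.

Lemma hexpD (R : realType) (T : finType) off ps n (f g : seq (T * nat) -> R) :
  hexp off ps n (fun h => f h + g h) = hexp off ps n f + hexp off ps n g.
Proof.
elim: n f g => [//|n IH] f g /=.
rewrite -big_split /=; apply: eq_bigr => q _.
rewrite -mulrDr -big_split /=; congr (_ * _); apply: eq_bigr => k _.
by rewrite IH mulrDr.
Qed.

Lemma hexpZ (R : realType) (T : finType) off ps n a (f : seq (T * nat) -> R) :
  hexp off ps n (fun h => a * f h) = a * hexp off ps n f.
Proof.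
elim: n f => [//|n IH] f /=.
rewrite mulr_sumr; apply: eq_bigr => q _.
rewrite mulrCA; congr (_ * _); rewrite mulr_sumr; apply: eq_bigr => k _.
by rewrite (IH (fun h => f ((q, nat_of_ord k) :: h))) mulrCA.
Qed.

Lemma sum_nth (R : realType) (X : Type) (s : seq X) x0 (G : X -> R) :
  \sum_(k < size s) G (nth x0 s k) = \sum_(x <- s) G x.
Proof. by rewrite (big_nth x0) big_mkord. Qed.

Lemma hexp_ext (R : realType) (T : finType) off ps n (f g : seq (T * nat) -> R) :
  (forall h, size h = n -> f h = g h) -> hexp off ps n f = hexp off ps n g.
Proof.
elim: n f g => [|n IH] f g H /=; first exact: H.
apply: eq_bigr => q _; congr (_ * _); apply: eq_bigr => k _; congr (_ * _).
by apply: IH => h Hh; apply: H => /=; rewrite Hh.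
Qed.

Lemma hexpC (R : realType) (T : finType) (off : T -> seq (R * seq T)) ps n (a : R) :
  (forall q, \sum_(pr <- off q) pr.1 = 1) -> \sum_q ps q = 1 ->
  hexp off ps n (fun _ => a) = a.
Proof.
move=> Ho Hp; elim: n => [//|n IH] /=.
under eq_bigr => q _ do under eq_bigr => k _ do rewrite IH.
under eq_bigr => q _ do rewrite -mulr_suml (sum_nth _ _ _ _ (fun pr : R * seq T => pr.1)) Ho mul1r.
by rewrite -mulr_suml Hp mul1r.
Qed.

Lemma hexp_sum (R : realType) (T : finType) (off : T -> seq (R * seq T)) ps n
  (I : Type) (s : seq I) (F : I -> seq (T * nat) -> R) :
  (forall q, \sum_(pr <- off q) pr.1 = 1) -> \sum_q ps q = 1 ->
  hexp off ps n (fun h => \sum_(x <- s) F x h) = \sum_(x <- s) hexp off ps n (F x).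
Proof.
move=> Ho Hp; elim: s => [|x s IH].
  rewrite big_nil; transitivity (hexp off ps n (fun _ => 0)); last exact: hexpC.
  by apply: hexp_ext => h _; rewrite big_nil.
rewrite big_cons -IH -hexpD; apply: hexp_ext => h _; by rewrite big_cons.
Qed.


Lemma hexp_snoc (R : realType) (T : finType) off ps n (f : seq (T * nat) -> R) :
  hexp off ps n.+1 f = hexp off ps n (fun h => \sum_q ps q *
     \sum_(k < size (off q)) (nth (0, [::]) (off q) k).1 * f (rcons h (q, nat_of_ord k))).
Proof.
elim: n f => [//|n IH] f.
have -> : hexp off ps n.+2 f = \sum_q ps q * \sum_(k < size (off q))
   (nth (0, [::]) (off q) k).1 * hexp off ps n.+1 (fun h => f ((q, nat_of_ord k) :: h)) by [].
under eq_bigr => q _ do under eq_bigr => k _ do rewrite IH.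
by [].
Qed.

Lemma Qrun_rcons (R : realType) (T : finType) off c lam i (Q : T -> R) h q k :
  Qrun off c lam i Q (rcons h (q, k)) =
  Qupd c lam (i + size h) (Qrun off c lam i Q h) q (nth (0, [::]) (off q) k).2.
Proof.
elim: h i Q => [|[q' k'] h IH] i Q /=; first by rewrite addn0.
by rewrite IH addSnnS.
Qed.

Lemma step_exp (R : realType) (T : finType) (off : T -> seq (R * seq T)) c lam ps i
   (Q : T -> R) t :
  (forall q, \sum_(pr <- off q) pr.1 = 1) -> \sum_q ps q = 1 ->
  \sum_q ps q * \sum_(k < size (off q)) (nth (0, [::]) (off q) k).1 *
      Qupd c lam i Q q (nth (0, [::]) (off q) k).2 t
  = Q t + lam i * ps t * (Top off c Q t - Q t).
Proof.
move=> Ho Hp.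
pose Y q := \sum_(k < size (off q)) (nth (0, [::]) (off q) k).1 *
   (lam i * (c q + \sum_(u <- (nth (0, [::]) (off q) k).2) Q u - Q q)).
have E1 : forall q, \sum_(k < size (off q)) (nth (0, [::]) (off q) k).1 *
      Qupd c lam i Q q (nth (0, [::]) (off q) k).2 t = Q t + (t == q)%:R * Y q.
  move=> q.
  have HQ : Q t = \sum_(k < size (off q)) (nth (0, [::]) (off q) k).1 * Q t.
    by rewrite -mulr_suml (sum_nth _ _ _ _ (fun pr : R * seq T => pr.1)) Ho mul1r.
  rewrite /Y mulr_sumr {1}HQ.
  rewrite -big_split /=; apply: eq_bigr => k _.
  rewrite /Qupd; case: ifP => [/eqP ->|Hf]; rewrite ?eqxx ?Hf /=; ring.
under eq_bigr => q _ do rewrite E1 mulrDr.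
rewrite big_split /= -mulr_suml Hp mul1r.
rewrite (bigD1 t) //= big1; last first.
  by move=> q; rewrite eq_sym => /negPf ->; rewrite mul0r mulr0.
have -> : Y t = lam i * (Top off c Q t - Q t).
  rewrite /Y (sum_nth _ _ _ _ (fun pr : R * seq T => pr.1 * (lam i * (c t + \sum_(u <- pr.2) Q u - Q t)))).
  rewrite /Top.
  have -> : \sum_(x <- off t) x.1 * (lam i * (c t + \sum_(u <- x.2) Q u - Q t)) =
     \sum_(x <- off t) (lam i * (c t - Q t)) * x.1 + lam i * \sum_(x <- off t) x.1 * \sum_(u <- x.2) Q u.
    rewrite mulr_sumr -big_split; apply: eq_bigr => x _ /=; ring.
  rewrite -mulr_sumr Ho; ring.
rewrite eqxx mul1r addr0; ring.
Qed.


Lemma hexp_Top (R : realType) (T : finType) (off : T -> seq (R * seq T)) c ps n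
   (F : seq (T * nat) -> T -> R) t :
  (forall q, \sum_(pr <- off q) pr.1 = 1) -> \sum_q ps q = 1 ->
  hexp off ps n (fun h => Top off c (F h) t) = Top off c (fun u => hexp off ps n (fun h => F h u)) t.
Proof.
move=> Ho Hp; rewrite /Top.
rewrite (hexpD _ _ off ps n (fun _ => c t)) hexpC //; congr (_ + _).
rewrite hexp_sum //; apply: eq_bigr => pr _.
by rewrite hexpZ hexp_sum.
Qed.

Lemma EQ_rec (R : realType) (T : finType) (off : T -> seq (R * seq T)) c lam ps Q0 i t :
  (forall q, \sum_(pr <- off q) pr.1 = 1) -> \sum_q ps q = 1 ->
  EQ off c lam ps Q0 i.+1 t = (1 - lam i * ps t) * EQ off c lam ps Q0 i t +
      lam i * ps t * Top off c (EQ off c lam ps Q0 i) t.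
Proof.
move=> Ho Hp; rewrite /EQ hexp_snoc.
rewrite (hexp_ext _ _ _ _ _ _ (fun h => (1 - lam i * ps t) * Qrun off c lam 0 Q0 h t +
     lam i * ps t * Top off c (Qrun off c lam 0 Q0 h) t)); last first.
  move=> h Hh.
  under eq_bigr => q _ do under eq_bigr => k _ do rewrite Qrun_rcons add0n Hh.
  rewrite step_exp //; ring.
rewrite (hexpD _ _ off ps i (fun h => (1 - lam i * ps t) * Qrun off c lam 0 Q0 h t)).
rewrite !hexpZ.
by rewrite hexp_Top.
Qed.

Lemma Fop_fin (R : realType) (T : finType) (off : T -> seq (R * seq T)) c (cs : T -> R) q :
  Fop off c (fun t => (cs t)%:E) q = (Top off c cs q)%:E.
Proof.
rewrite /Fop /Top.
under eq_bigr => pr _ do rewrite sumEFin -EFinM.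
by rewrite sumEFin -EFinD.
Qed.

Lemma Top_mono (R : realType) (T : finType) (off : T -> seq (R * seq T)) c (Q Q' : T -> R) q :
  (forall pr, pr \in off q -> 0 <= pr.1) -> (forall u, Q u <= Q' u) ->
  Top off c Q q <= Top off c Q' q.
Proof.
move=> Hpos HQ; rewrite /Top lerD2l big_seq [X in _ <= X]big_seq.
apply: ler_sum => pr Hpr; apply: ler_wpM2l; first exact: Hpos.
by apply: ler_sum => u _.
Qed.

Lemma TopZ (R : realType) (T : finType) (off : T -> seq (R * seq T)) c (Q : T -> R) k q :
  Top off c (fun t => k * Q t) q = c q + k * (Top off c Q q - c q).
Proof.
rewrite /Top addrAC subrr add0r mulr_sumr; congr (_ + _); apply: eq_bigr => pr _.
by rewrite -mulr_sumr mulrCA.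
Qed.

Theorem lemma1 (R : realType) (T : finType)
  (off : T -> seq (R * seq T)) (c : T -> R)
  (lam : nat -> R) (ps : T -> R) (cs : T -> R) (kappa : R) :
  is_BMC off c ->
  is_lfp_F off c cs ->
  (forall i, 0 <= lam i <= 1) ->
  (forall q, 0 <= ps q) -> \sum_(q : T) ps q = 1 ->
  1 <= kappa ->
  forall i : nat, forall q : T,
    let EQi := EQ off c lam ps (fun t => kappa * cs t) i in
    let EQi1 := EQ off c lam ps (fun t => kappa * cs t) i.+1 in
    cs q <= Top off c EQi q /\ Top off c EQi q <= EQi1 q /\ EQi1 q <= EQi q.
Proof.
move=> [Hoff Hc] [Hcs0 [Hfix _]] Hlam Hps0 Hps Hk.
have Ho : forall q, \sum_(pr <- off q) pr.1 = 1 by move=> q; case: (Hoff q).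
have Hpos : forall q pr, pr \in off q -> 0 <= pr.1 by move=> q; case: (Hoff q).
have Hfx : forall q, Top off c cs q = cs q.
  by move=> q; apply: EFin_inj; rewrite -Fop_fin Hfix.
have Hps1 : forall u, ps u <= 1.
  by move=> u; rewrite -Hps (bigD1 u) //= lerDl sumr_ge0.
set x := EQ off c lam ps (fun t => kappa * cs t).
have Hrec : forall i u, x i.+1 u = (1 - lam i * ps u) * x i u + lam i * ps u * Top off c (x i) u.
  by move=> i u; rewrite /x EQ_rec.
have Ha : forall i u, 0 <= lam i * ps u <= 1.
  move=> i u; have /andP[l0 l1] := Hlam i; have p0 := Hps0 u; have p1 := Hps1 u.
  apply/andP; split; nra.
have Inv : forall i, (forall u, cs u <= x i u) /\ (forall u, Top off c (x i) u <= x i u).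
  elim=> [|i [IH1 IH2]].
    have Hx0 : x 0 = (fun t => kappa * cs t) by [].
    rewrite Hx0; split => u.
      have := Hcs0 u; nra.
    rewrite TopZ Hfx; have := Hc u; have := Hcs0 u; nra.
  have Hdec : forall u, x i.+1 u <= x i u.
    move=> u; rewrite Hrec; have /andP[a0 a1] := Ha i u; have := IH2 u; nra.
  have Hinc : forall u, Top off c (x i) u <= x i.+1 u.
    move=> u; rewrite Hrec; have /andP[a0 a1] := Ha i u; have := IH2 u; nra.
  split => u.
    apply: le_trans (Hinc u); rewrite -{1}Hfx; exact: Top_mono (Hpos u) IH1.
  apply: le_trans (Hinc u); exact: Top_mono (Hpos u) Hdec.
move=> i q EQi EQi1.
have [I1 I2] := Inv i.
have Hdec : EQi1 q <= EQi q.
  rewrite /EQi1 /EQi -/x Hrec; have /andP[a0 a1] := Ha i q; have := I2 q; nra.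
have Hinc : Top off c EQi q <= EQi1 q.
  rewrite /EQi1 /EQi -/x Hrec; have /andP[a0 a1] := Ha i q; have := I2 q; nra.
split; last by split.
rewrite -{1}Hfx; exact: Top_mono (Hpos q) I1.
Qed.
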